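(* Let $\alpha,\beta,\gamma\in\Phi^+$ and $w\in W$ with \[\ell(s_\alpha s_\beta s_\gamma w)=\ell(s_\beta s_\gamma w)-1=\ell(s_\gamma w)-2=\ell(w)-3.\] If $(\alpha,\beta)\ne0$ or $(\alpha,\gamma)\neq0$, then there exist $\alpha',\beta',\gamma'\in\Phi^+$ with $(\beta',\gamma')\ne0$, $s_\alpha s_\beta s_\gamma=s_{\alpha'}s_{\beta'}s_{\gamma'}$, and \[\ell(s_{\alpha'}s_{\beta'}s_{\gamma'}w)=\ell(s_{\beta'}s_{\gamma'}w)-1=\ell(s_{\gamma'}w)-2=\ell(w)-3.\]
   Context: $\Phi$ is the (finite, crystallographic) root system of a complex semisimple Lie algebra, $\Phi^+$ its positive roots with respect to a fixed basis, $W$ the Weyl group with length function $\ell$, $(\cdot,\cdot)$ a $W$-invariant scalar product, and $s_\beta$ the reflection in $\beta$. *)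

(* Defs.v *)
(* Root systems realised in the Euclidean space R^n
   (column vectors over an arbitrary real field R) with the standard
   scalar product, which is W-invariant. *)
From HB Require Import structures.
From mathcomp Require Import all_boot all_order all_algebra.
Set Implicit Arguments. Unset Strict Implicit. Unset Printing Implicit Defensive.
Import Order.TTheory GRing.Theory Num.Theory.
Local Open Scope ring_scope.

Section RootSystems.
Variables (R : realFieldType) (n : nat).

Definition dot (u v : 'cV[R]_n) : R := (u^T *m v) 0 0.

Definition refl (a : 'cV[R]_n) : 'M[R]_n :=
  1%:M - (2 / dot a a) *: (a *m a^T).

(* Phi is a (reduced, crystallographic) root system spanning R^n
   (semisimple case). Phi is a finite list. *)
Definition root_system (Phi : seq 'cV[R]_n) : Prop :=
  [/\ (0 \notin Phi),
      (forall v : 'cV[R]_n, exists c : 'I_(size Phi) -> R,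
          v = \sum_(i < size Phi) c i *: Phi`_i),
      (forall a b, a \in Phi -> b \in Phi -> refl a *m b \in Phi),
      (forall a b, a \in Phi -> b \in Phi ->
          exists z : int, 2 * dot a b / dot a a = z%:~R) &
      (forall a (c : R), a \in Phi -> c *: a \in Phi -> c = 1 \/ c = -1)].

Definition is_base (Phi Delta : seq 'cV[R]_n) : Prop :=
  [/\ {subset Delta <= Phi},
      (forall c : 'I_(size Delta) -> R,
          \sum_(i < size Delta) c i *: Delta`_i = 0 -> forall i, c i = 0) &
      (forall a, a \in Phi -> exists c : 'I_(size Delta) -> int,
          a = \sum_(i < size Delta) (c i)%:~R *: Delta`_i /\
          ((forall i, 0 <= c i) \/ (forall i, c i <= 0)))].

Definition pos_root (Phi Delta : seq 'cV[R]_n) (a : 'cV[R]_n) : Prop :=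
  a \in Phi /\ exists c : 'I_(size Delta) -> int,
    a = \sum_(i < size Delta) (c i)%:~R *: Delta`_i /\ (forall i, 0 <= c i).

Definition refl_word (s : seq 'cV[R]_n) : 'M[R]_n :=
  foldr (fun a M => refl a *m M) 1%:M s.

Definition in_weyl (Phi : seq 'cV[R]_n) (w : 'M[R]_n) : Prop :=
  exists s : seq 'cV[R]_n, {subset s <= Phi} /\ w = refl_word s.

Definition weyl_len (Delta : seq 'cV[R]_n) (w : 'M[R]_n) (k : nat) : Prop :=
  (exists s : seq 'cV[R]_n, [/\ size s = k, {subset s <= Delta} & w = refl_word s])
  /\ (forall s : seq 'cV[R]_n, {subset s <= Delta} -> w = refl_word s -> (k <= size s)%N).

End RootSystems.

(* Main.v *)
Require Import Defs.
From HB Require Import structures.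
From mathcomp Require Import all_boot all_order all_algebra.
Set Implicit Arguments. Unset Strict Implicit. Unset Printing Implicit Defensive.
Import Order.TTheory GRing.Theory Num.Theory.
Local Open Scope ring_scope.

Section Basics.
Variables (R : realFieldType) (n : nat).
Implicit Types (u v x y a b : 'cV[R]_n) (M N : 'M[R]_n).

Lemma dotE u v : dot u v = \sum_i u i 0 * v i 0.
Proof. by rewrite /dot !mxE; apply: eq_bigr => i _; rewrite mxE. Qed.

Lemma dotC u v : dot u v = dot v u.
Proof. by rewrite !dotE; apply: eq_bigr => i _; rewrite mulrC. Qed.

Lemma dotDl u v x : dot (u + v) x = dot u x + dot v x.
Proof. by rewrite !dotE -big_split; apply: eq_bigr => i _; rewrite mxE mulrDl. Qed.

Lemma dotZl k u x : dot (k *: u) x = k * dot u x.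
Proof. by rewrite !dotE mulr_sumr; apply: eq_bigr => i _; rewrite mxE mulrA. Qed.

Lemma dotNl u x : dot (- u) x = - dot u x.
Proof. by rewrite -scaleN1r dotZl mulN1r. Qed.

Lemma dotBl u v x : dot (u - v) x = dot u x - dot v x.
Proof. by rewrite dotDl dotNl. Qed.

Lemma dotDr u v x : dot x (u + v) = dot x u + dot x v.
Proof. by rewrite !(dotC x) dotDl. Qed.
Lemma dotZr k u x : dot x (k *: u) = k * dot x u.
Proof. by rewrite !(dotC x) dotZl. Qed.
Lemma dotNr u x : dot x (- u) = - dot x u.
Proof. by rewrite !(dotC x) dotNl. Qed.
Lemma dotBr u v x : dot x (u - v) = dot x u - dot x v.
Proof. by rewrite !(dotC x) dotBl. Qed.

Lemma dot_ge0 u : 0 <= dot u u.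
Proof. by rewrite dotE; apply: sumr_ge0 => i _; rewrite -expr2 sqr_ge0. Qed.

Lemma dot_eq0 u : dot u u = 0 -> u = 0.
Proof.
rewrite dotE => H; apply/matrixP => i j; rewrite mxE (ord1 j).
have Hn : forall k : 'I_n, predT k -> 0 <= u k 0 * u k 0.
  by move=> k _; rewrite -expr2 sqr_ge0.
have := @psumr_eq0P _ _ predT (fun i => u i 0 * u i 0) Hn H i isT.
by move/eqP; rewrite mulf_eq0 orbb => /eqP.
Qed.

Lemma dot_mxl M u v : dot (M *m u) v = dot u (M^T *m v).
Proof. by rewrite /dot trmx_mul mulmxA. Qed.

Lemma mx_ext M N : (forall x, M *m x = N *m x) -> M = N.
Proof.
move=> H; apply/matrixP => i j.
have := congr1 (fun A : 'cV[R]_n => A i 0) (H (delta_mx j 0)).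
by rewrite /= -!colE !mxE.
Qed.

Lemma tr_dot a u : a^T *m u = (dot a u)%:M.
Proof. by rewrite {1}[a^T *m u]mx11_scalar. Qed.

Lemma reflE a x : refl a *m x = x - (2 * dot a x / dot a a) *: a.
Proof.
rewrite /refl mulmxBl mul1mx -scalemxAl -mulmxA tr_dot mul_mx_scalar.
by rewrite scalerA mulrAC.
Qed.

Lemma refl_sym a : (refl a)^T = refl a.
Proof. by rewrite /refl linearB /= trmx1 linearZ /= trmx_mul trmxK. Qed.

End Basics.
Section Refl.
Variables (R : realFieldType) (n : nat).
Implicit Types (u v x y a b : 'cV[R]_n) (M N : 'M[R]_n).

Lemma refl_lin a u v k : refl a *m (u - k *: v) = refl a *m u - k *: (refl a *m v).
Proof. by rewrite mulmxBr scalemxAr. Qed.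

Lemma refl_invol a x : dot a a != 0 -> refl a *m (refl a *m x) = x.
Proof.
move=> Ha; rewrite [refl a *m (refl a *m x)]reflE [refl a *m x]reflE.
set k := 2 * dot a x / dot a a.
have -> : dot a (x - k *: a) = - dot a x.
  by rewrite dotBr dotZr /k divfK // mulr_natl mulr2n opprD addrA subrr sub0r.
rewrite mulrN mulNr scaleNr opprK /k.
by rewrite subrK.
Qed.

Lemma refl_self a : dot a a != 0 -> refl a *m a = - a.
Proof.
by move=> Ha; rewrite reflE mulfK // scaler_nat mulr2n opprD addrA subrr sub0r.
Qed.

Lemma dot_refl a u v : dot (refl a *m u) v = dot u (refl a *m v).
Proof. by rewrite dot_mxl refl_sym. Qed.

Lemma dot_refl2 a u v : dot a a != 0 -> dot (refl a *m u) (refl a *m v) = dot u v.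
Proof. by move=> Ha; rewrite dot_refl refl_invol. Qed.

Lemma refl_conj a b x : dot a a != 0 -> dot b b != 0 ->
  refl (refl a *m b) *m x = refl a *m (refl b *m (refl a *m x)).
Proof.
move=> Ha Hb; rewrite [refl b *m _]reflE refl_lin refl_invol //.
by rewrite reflE dot_refl2 // dot_refl.
Qed.

Lemma refl_mulK a : dot a a != 0 -> refl a *m refl a = 1%:M.
Proof. by move=> Ha; apply: mx_ext => x; rewrite -mulmxA refl_invol // mul1mx. Qed.

Lemma refl_conjM a b : dot a a != 0 -> dot b b != 0 ->
  refl (refl a *m b) = refl a *m refl b *m refl a.
Proof. by move=> Ha Hb; apply: mx_ext => x; rewrite refl_conj // !mulmxA. Qed.

Lemma refl_orth b c : dot b c = 0 -> refl b *m c = c.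
Proof. by move=> H; rewrite reflE H mulr0 mul0r scale0r subr0. Qed.

Lemma refl_comm b c : dot b b != 0 -> dot c c != 0 -> dot b c = 0 ->
  refl b *m refl c = refl c *m refl b.
Proof.
move=> Hb Hc H.
have E : refl c = refl b *m refl c *m refl b by rewrite -refl_conjM // refl_orth.
by rewrite {2}E -!mulmxA refl_mulK // mulmx1.
Qed.

End Refl.

Lemma refl_K (R : realFieldType) (n : nat) (a : 'cV[R]_n) (M : 'M[R]_n) :
  dot a a != 0 -> refl a *m (refl a *m M) = M.
Proof. by move=> Ha; rewrite mulmxA refl_mulK // mul1mx. Qed.
Section Cone.
Variables (R : realFieldType) (n : nat) (Phi Delta : seq 'cV[R]_n).
Hypothesis HR : root_system Phi.
Hypothesis HB : is_base Phi Delta.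
Implicit Types (u v x y a b : 'cV[R]_n) (M N : 'M[R]_n).

Definition cone u := exists c : 'I_(size Delta) -> R,
  (forall i, 0 <= c i) /\ u = \sum_(i < size Delta) c i *: Delta`_i.

Lemma cone_add u v : cone u -> cone v -> cone (u + v).
Proof.
move=> [c [c0 ->]] [d [d0 ->]]; exists (fun i => c i + d i); split.
  by move=> i; rewrite addr_ge0.
by rewrite -big_split; apply: eq_bigr => i _; rewrite scalerDl.
Qed.

Lemma cone_scale k u : 0 <= k -> cone u -> cone (k *: u).
Proof.
move=> k0 [c [c0 ->]]; exists (fun i => k * c i); split.
  by move=> i; rewrite mulr_ge0.
by rewrite scaler_sumr; apply: eq_bigr => i _; rewrite scalerA.
Qed.

Lemma cone_anti u : cone u -> cone (- u) -> u = 0.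
Proof.
move=> [c [c0 Hc]] [d [d0 Hd]].
case: HB => _ Hind _.
have Hs : \sum_(i < size Delta) (c i + d i) *: Delta`_i = 0.
  rewrite (eq_bigr (fun i => c i *: Delta`_i + d i *: Delta`_i)); last first.
    by move=> i _; rewrite scalerDl.
  by rewrite big_split /= -Hc -Hd subrr.
have Hz := Hind _ Hs.
rewrite Hc; apply: big1 => i _.
have : c i + d i = 0 by apply: Hz.
move=> /eqP; rewrite paddr_eq0 // => /andP [/eqP -> _].
by rewrite scale0r.
Qed.

Lemma pos_cone a : pos_root Phi Delta a -> cone a.
Proof.
move=> [_ [c [-> Hc]]]; exists (fun i => (c i)%:~R); split => //.
by move=> i; rewrite ler0z.
Qed.

Lemma root_nz a : a \in Phi -> a != 0.
Proof. by case: HR => H0 _ _ _ _ Ha; apply: contraNneq H0 => <-. Qed.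

Lemma root_dot a : a \in Phi -> dot a a != 0.
Proof. by move=> Ha; apply/eqP => /dot_eq0 /eqP; apply/negP; apply: root_nz. Qed.

Lemma root_refl a b : a \in Phi -> b \in Phi -> refl a *m b \in Phi.
Proof. by case: HR => _ _ H _ _; apply: H. Qed.

Lemma root_opp a : a \in Phi -> - a \in Phi.
Proof. by move=> Ha; rewrite -refl_self ?root_dot // root_refl. Qed.

Lemma root_dich a : a \in Phi -> cone a \/ cone (- a).
Proof.
move=> Ha; case: HB => _ _ /(_ a Ha) [c [Hc [H|H]]].
  by left; exists (fun i => (c i)%:~R); split => // i; rewrite ler0z.
right; exists (fun i => - (c i)%:~R); split.
  by move=> i; rewrite oppr_ge0 lerz0 H.
rewrite Hc -sumrN; apply: eq_bigr => i _; by rewrite scaleNr.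
Qed.

Lemma cone_pos a : a \in Phi -> cone a -> pos_root Phi Delta a.
Proof.
move=> Ha Hca; split => //.
case: HB => _ _ /(_ a Ha) [c [Hc [H|H]]]; first by exists c.
have Hn : cone (- a).
  exists (fun i => - (c i)%:~R); split.
    by move=> i; rewrite oppr_ge0 lerz0 H.
  rewrite Hc -sumrN; apply: eq_bigr => i _; by rewrite scaleNr.
by have := root_nz Ha; rewrite (cone_anti Hca Hn) eqxx.
Qed.

Lemma root_not_both a : a \in Phi -> cone a -> cone (- a) -> False.
Proof. by move=> Ha H1 H2; have := root_nz Ha; rewrite (cone_anti H1 H2) eqxx. Qed.

End Cone.
Section Exch.
Variables (R : realFieldType) (n : nat) (Phi Delta : seq 'cV[R]_n).
Hypothesis HR : root_system Phi.
Hypothesis HB : is_base Phi Delta.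
Implicit Types (u v x y a b : 'cV[R]_n) (M N : 'M[R]_n).

Lemma delta_sub : {subset Delta <= Phi}.
Proof. by case: HB. Qed.

Lemma trw_cons x s v : (refl_word (x :: s))^T *m v = (refl_word s)^T *m (refl x *m v).
Proof. by rewrite /= trmx_mul refl_sym mulmxA. Qed.

Lemma trw_nil v : (refl_word ([::] : seq 'cV[R]_n))^T *m v = v.
Proof. by rewrite /= trmx1 mul1mx. Qed.

Lemma word_root s r : {subset s <= Phi} -> r \in Phi -> (refl_word s)^T *m r \in Phi.
Proof.
elim: s r => [|x s IH] r Hs Hr; first by rewrite trw_nil.
rewrite trw_cons; apply: IH.
  by move=> y Hy; apply: Hs; rewrite inE Hy orbT.
by apply: root_refl => //; apply: Hs; rewrite inE eqxx.
Qed.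

Lemma simple_perm al g : al \in Delta -> pos_root Phi Delta g -> g != al ->
  pos_root Phi Delta (refl al *m g).
Proof.
move=> Hal Hg Hne.
have HalP := delta_sub Hal.
have HgP : g \in Phi by case: Hg.
have Hr : refl al *m g \in Phi by apply: root_refl.
case: (root_dich HB Hr) => [H|H]; first by apply: cone_pos.
exfalso; move: Hne => /eqP; apply.
have [c [c0 Hc]] := pos_cone Hg.
case: H => d [d0 Hd].
set k := 2 * dot al g / dot al al.
have Hj : (index al Delta < size Delta)%N by rewrite index_mem.
pose J := Ordinal Hj.
have HJ : Delta`_J = al by rewrite /= nth_index.
have Hsum : \sum_(i < size Delta) (if i == J then k else 0) *: Delta`_i = k *: al.
  rewrite (bigD1 J) //= big1 ?addr0; first by rewrite eqxx HJ.
  by move=> i /negbTE ->; rewrite scale0r.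
have Hz : \sum_(i < size Delta) (c i + d i - (if i == J then k else 0)) *: Delta`_i = 0.
  rewrite (eq_bigr (fun i => c i *: Delta`_i + d i *: Delta`_i
     - (if i == J then k else 0) *: Delta`_i)); last first.
    by move=> i _; rewrite scalerBl scalerDl.
  rewrite sumrB big_split /= Hsum -Hc -Hd reflE -/k opprB addrCA subrr addr0.
  by rewrite subrr.
case: HB => _ Hind _.
have Hci : forall i, i != J -> c i = 0.
  move=> i Hi; have := Hind _ Hz i; rewrite (negbTE Hi) subr0 => /eqP.
  by rewrite paddr_eq0 // => /andP [/eqP -> _].
have Hg2 : g = c J *: al.
  rewrite Hc (bigD1 J) //= big1 ?addr0 ?HJ //.
  by move=> i Hi; rewrite Hci // scale0r.
case: HR => _ _ _ _ Hmul.
have : c J = 1 \/ c J = -1 by apply: (Hmul al (c J) HalP); rewrite -Hg2.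
case=> HcJ; first by rewrite Hg2 HcJ scale1r.
by have := c0 J; rewrite HcJ oppr_ge0 ler10.
Qed.

Lemma exch s g : {subset s <= Delta} -> pos_root Phi Delta g ->
  cone Delta (- ((refl_word s)^T *m g)) ->
  exists s', [/\ {subset s' <= Delta}, size s = (size s').+1 &
                 refl g *m refl_word s = refl_word s'].
Proof.
elim: s g => [|al s IH] g Hs Hg Hn.
  exfalso; rewrite trw_nil in Hn.
  by apply: (root_not_both HR HB _ (pos_cone Hg) Hn); case: Hg.
rewrite trw_cons in Hn.
have Hal : al \in Delta by apply: Hs; rewrite inE eqxx.
have Hs0 : {subset s <= Delta} by move=> y Hy; apply: Hs; rewrite inE Hy orbT.
have Had : dot al al != 0 by apply: (root_dot HR); apply: delta_sub.
have Hgd : dot g g != 0 by apply: (root_dot HR); case: Hg.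
case: (eqVneq g al) => [->|Hne].
  exists s; split => //.
  by rewrite /= mulmxA refl_mulK // mul1mx.
have Hg' := simple_perm Hal Hg Hne.
have [s' [Hs' Hsz Heq]] := IH _ Hs0 Hg' Hn.
exists (al :: s'); split => //=; first by move=> y; rewrite inE => /orP [/eqP ->|]; [exact: Hal| exact: Hs'].
  by rewrite Hsz.
by rewrite -Heq refl_conjM // !mulmxA refl_mulK // mul1mx.
Qed.

End Exch.
Section Len.
Variables (R : realFieldType) (n : nat) (Phi Delta : seq 'cV[R]_n).
Hypothesis HR : root_system Phi.
Hypothesis HB : is_base Phi Delta.
Implicit Types (u v x y a b g : 'cV[R]_n) (X : 'M[R]_n).

Definition haswd X k := exists s, [/\ size s = k, {subset s <= Delta} & X = refl_word s].

Lemma word_down X k g : haswd X k.+1 -> pos_root Phi Delta g ->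
  cone Delta (- (X^T *m g)) -> haswd (refl g *m X) k.
Proof.
move=> [s [Hsz Hs ->]] Hg Hn.
have [s' [Hs' Hsz' Heq]] := exch HR HB Hs Hg Hn.
by exists s'; split => //; move: Hsz; rewrite Hsz' => -[].
Qed.

Lemma len_up X k g : weyl_len Delta (refl g *m X) k -> pos_root Phi Delta g ->
  cone Delta (- (X^T *m g)) -> haswd X k.+1 -> weyl_len Delta X k.+1.
Proof.
move=> [_ Hmin] Hg Hn Hw; split => // s Hs HX.
have Hn' : cone Delta (- ((refl_word s)^T *m g)) by rewrite -HX.
have [s' [Hs' Hsz' Heq]] := exch HR HB Hs Hg Hn'.
rewrite Hsz' ltnS; apply: Hmin => //; by rewrite HX.
Qed.

Lemma sign_of_drop X M m g : weyl_len Delta X M -> weyl_len Delta (refl g *m X) m ->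
  (m < M)%N -> pos_root Phi Delta g -> cone Delta (- (X^T *m g)).
Proof.
move=> [[s [Hsz Hs HX]] HminX] [[t [Htz Ht HY]] _] HmM Hg.
have HgP : g \in Phi by case: Hg.
have Hgd : dot g g != 0 by apply: (root_dot HR).
have Hr : X^T *m g \in Phi.
  by rewrite HX; apply: (word_root HR) => // y /Hs; apply: (delta_sub HB).
case: (root_dich HB Hr) => // Hp; exfalso.
have Hn : cone Delta (- ((refl_word t)^T *m g)).
  by rewrite -HY trmx_mul refl_sym -mulmxA refl_self // mulmxN opprK.
have [t' [Ht' Htz' Heq]] := exch HR HB Ht Hg Hn.
have : (M <= size t')%N.
  apply: HminX => //; by rewrite -Heq -HY mulmxA refl_mulK // mul1mx.
have Hlt : (size t' < M)%N by apply: ltn_trans HmM; rewrite -Htz Htz' ltnSn.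
by rewrite leqNgt Hlt.
Qed.

End Len.
Section Core.
Variables (R : realFieldType) (n : nat) (Phi Delta : seq 'cV[R]_n).
Hypothesis HR : root_system Phi.
Hypothesis HB : is_base Phi Delta.
Variable V : 'M[R]_n.
Hypothesis HV : forall r, r \in Phi -> V *m r \in Phi.
Implicit Types (u v x y a b c g : 'cV[R]_n).

Local Notation pos := (pos_root Phi Delta).
Local Notation negv u := (cone Delta (- u)).

Definition G a b c a' b' c' := [/\ [/\ pos a', pos b' & pos c'], dot b' c' != 0,
  refl a *m refl b *m refl c = refl a' *m refl b' *m refl c' &
  [/\ negv (V *m c'), negv (V *m (refl c' *m b')) &
  negv (V *m (refl c' *m (refl b' *m a')))]].

Lemma posP a : pos a -> a \in Phi. Proof. by case. Qed.
Lemma posD a : pos a -> dot a a != 0. Proof. by move/posP; apply: root_dot. Qed.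

Lemma reflP a b : pos a -> pos b -> refl a *m b \in Phi.
Proof. by move=> /posP Ha /posP Hb; apply: root_refl. Qed.

Lemma K1 a b c : pos a -> pos b -> pos c -> dot b c = 0 -> dot a b != 0 ->
  negv (V *m b) -> negv (V *m c) -> pos (refl a *m c) ->
  negv (V *m (refl b *m a)) -> G a b c (refl a *m c) a b.
Proof.
move=> Pa Pb Pc Hbc Hab Nb Nc Pac Nba.
have Da := posD Pa; have Db := posD Pb; have Dc := posD Pc.
split; [by split | by [] | | split => //].
- by rewrite refl_conjM // -!mulmxA refl_K // (refl_comm Db Dc Hbc).
- by rewrite refl_invol // refl_orth.
Qed.

Lemma K2 a b c : pos a -> pos b -> pos c -> dot b c = 0 -> dot a c != 0 ->
  negv (V *m b) -> negv (V *m c) -> pos (refl a *m b) ->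
  negv (V *m (refl c *m a)) -> G a b c (refl a *m b) a c.
Proof.
move=> Pa Pb Pc Hbc Hac Nb Nc Pab Nca.
have Da := posD Pa; have Db := posD Pb; have Dc := posD Pc.
split; [by split | by [] | | split => //].
- by rewrite refl_conjM // -!mulmxA refl_K //.
- by rewrite refl_invol // refl_orth // dotC.
Qed.

Lemma K3 a b c : pos a -> pos b -> pos c -> dot b c = 0 -> dot a c != 0 ->
  negv (V *m c) -> negv (V *m (refl c *m (refl b *m a))) -> pos (refl b *m a) ->
  negv (V *m (refl c *m (refl (refl b *m a) *m b))) -> G a b c b (refl b *m a) c.
Proof.
move=> Pa Pb Pc Hbc Hac Nc Nz Pba N3.
have Da := posD Pa; have Db := posD Pb; have Dc := posD Pc.
split; [by split | | | split => //].
- by rewrite dot_refl refl_orth.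
- by rewrite refl_conjM // !mulmxA refl_mulK // mul1mx.
Qed.

Lemma K4 a b c : pos a -> pos b -> pos c -> dot b c = 0 -> dot a b != 0 ->
  negv (V *m b) -> negv (V *m (refl c *m (refl b *m a))) -> pos (refl c *m a) ->
  negv (V *m (refl b *m (refl (refl c *m a) *m c))) -> G a b c c (refl c *m a) b.
Proof.
move=> Pa Pb Pc Hbc Hab Nb Nz Pca N3.
have Da := posD Pa; have Db := posD Pb; have Dc := posD Pc.
split; [by split | | | split => //].
- by rewrite dot_refl refl_orth // dotC.
- by rewrite refl_conjM // -!mulmxA refl_K // (refl_comm Db Dc Hbc).
- have -> : refl b *m (refl c *m a) = refl c *m (refl b *m a) by rewrite !mulmxA (refl_comm Db Dc Hbc).
  done.
Qed.

End Core.
Section Scal.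
Variable R : realFieldType.

Lemma int_12 (z : int) : 0 < (z%:~R : R) -> (z%:~R : R) = 1 \/ 2 <= (z%:~R : R).
Proof.
rewrite ltr0z; case: z => [[|[|k]]|k] //= _; first by left.
by right; rewrite -[2%R]/((2%:Z)%:~R) ler_int.
Qed.

Lemma int_ge1 (z : int) : 0 < (z%:~R : R) -> 1 <= (z%:~R : R).
Proof. by rewrite ltr0z ler1z. Qed.

Lemma prod_one (x y : R) (z1 z2 : int) : x = z1%:~R -> y = z2%:~R -> 0 < x -> 0 < y ->
  x * y = 1 -> x = 1 /\ y = 1.
Proof.
move=> Hx Hy x0 y0 Hxy.
have x1 : 1 <= x by rewrite Hx int_ge1 // -Hx.
have y1 : 1 <= y by rewrite Hy int_ge1 // -Hy.
have Ex : x = 1.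
  apply: le_anti; rewrite x1 andbT -Hxy ler_peMr //; exact: ltW.
by split => //; move: Hxy; rewrite Ex mul1r.
Qed.

End Scal.
Section Both.
Variables (R : realFieldType) (n : nat).

Lemma two_nz : (2 : R) != 0. Proof. by rewrite pnatr_eq0. Qed.

Lemma half_coef (x y : R) : y != 0 -> 2 * x / y / 2 = x / y.
Proof. by move=> Hy; rewrite mulrAC (mulrC 2 x) mulfK // two_nz. Qed.

Lemma dot_gt0 (u : 'cV[R]_n) : dot u u != 0 -> 0 < dot u u.
Proof. by move=> H; rewrite lt0r H dot_ge0. Qed.

Lemma both2 (a b c : 'cV[R]_n) : dot a a != 0 -> dot b b != 0 -> dot c c != 0 -> dot b c = 0 ->
  2 <= (2 * dot b a / dot b b) * (2 * dot a b / dot a a) ->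
  2 <= (2 * dot c a / dot c c) * (2 * dot a c / dot a a) ->
  a = (2 * dot b a / dot b b / 2) *: b + (2 * dot c a / dot c c / 2) *: c /\
  (2 * dot b a / dot b b) * (2 * dot a b / dot a a) = 2.
Proof.
move=> Da Db Dc Hbc.
set p := 2 * dot b a / dot b b; set p' := 2 * dot a b / dot a a.
set q := 2 * dot c a / dot c c; set q' := 2 * dot a c / dot a a.
move=> Hp Hq.
set al := dot a a.
have al0 : 0 < al by apply: dot_gt0.
set a0 := a - (p / 2) *: b - (q / 2) *: c.
have Hb0 : dot b a0 = 0.
  rewrite /a0 !dotBr !dotZr Hbc mulr0 subr0 /p half_coef // divfK //.
  by rewrite subrr.
have Hc0 : dot c a0 = 0.
  rewrite /a0 !dotBr !dotZr (dotC c b) Hbc mulr0 subr0 /q half_coef // divfK //.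
  by rewrite subrr.
have Ha0 : dot a0 a0 = al - p / 2 * dot b a - q / 2 * dot c a.
  have -> : dot a0 a0 = dot a a0 - p / 2 * dot b a0 - q / 2 * dot c a0.
    by rewrite [in LHS]/a0 !dotBl !dotZl.
  rewrite Hb0 Hc0 !mulr0 !subr0.
  by rewrite /a0 !dotBr !dotZr (dotC a b) (dotC a c).
have h4 : (4:R) = 2 * 2 by rewrite -natrM.
have Es : 4 * (p / 2 * dot b a) = p * p' * al.
  have h1 : p' * al = 2 * dot b a by rewrite /p' divfK // dotC.
  rewrite -[p * p' * al]mulrA h1 h4 -mulrA (mulrA 2 (p / 2)) (mulrC 2 (p / 2)) divfK ?two_nz //.
  by rewrite mulrCA.
have Et : 4 * (q / 2 * dot c a) = q * q' * al.
  have h1 : q' * al = 2 * dot c a by rewrite /q' divfK // dotC.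
  rewrite -[q * q' * al]mulrA h1 h4 -mulrA (mulrA 2 (q / 2)) (mulrC 2 (q / 2)) divfK ?two_nz //.
  by rewrite mulrCA.
move: Ha0 Es Et; set s := p / 2 * dot b a; set t := q / 2 * dot c a => Ha0 Es Et.
have two0 : (0:R) < 2 by [].
have H2s : al <= 2 * s.
  rewrite -(ler_pM2l two0) mulrA -h4 Es; by rewrite ler_pM2r.
have H2t : al <= 2 * t.
  rewrite -(ler_pM2l two0) mulrA -h4 Et; by rewrite ler_pM2r.
have Hst : s + t <= al.
  by rewrite -subr_ge0 opprD addrA -Ha0 dot_ge0.
have E2s : 2 * s = al.
  apply: le_anti; rewrite H2s andbT.
  have : 2 * s + 2 * t <= 2 * al by rewrite -mulrDr ler_pM2l.
  move=> H.
  have H1 : 2 * s <= 2 * al - 2 * t by rewrite lerBrDr.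
  have H2 : 2 * al - 2 * t <= al by rewrite lerBlDr mulr_natl mulr2n lerD2l.
  exact: le_trans H1 H2.
have E2t : 2 * t = al.
  apply: le_anti; rewrite H2t andbT.
  have : 2 * s + 2 * t <= 2 * al by rewrite -mulrDr ler_pM2l.
  rewrite E2s => H.
  by move: H; rewrite !mulr_natl [al *+ 2]mulr2n lerD2l.
have Hz : dot a0 a0 = 0.
  have : 2 * dot a0 a0 = 0.
    rewrite Ha0 !mulrBr E2s E2t mulr_natl mulr2n.
    by rewrite addrK subrr.
  by move/eqP; rewrite mulf_eq0 (negbTE two_nz) => /eqP.
split.
  have := dot_eq0 Hz; rewrite /a0 => /eqP; rewrite subr_eq add0r subr_eq => /eqP ->.
  by rewrite addrC.
by apply: (mulIf (lt0r_neq0 al0)); rewrite -Es h4 -mulrA E2s.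
Qed.

End Both.
Section Core2.
Variables (R : realFieldType) (n : nat) (Phi Delta : seq 'cV[R]_n).
Hypothesis HR : root_system Phi.
Hypothesis HB : is_base Phi Delta.
Variable V : 'M[R]_n.
Hypothesis HV : forall r, r \in Phi -> V *m r \in Phi.
Local Notation pos := (pos_root Phi Delta).
Local Notation negv u := (cone Delta (- u)).

Lemma negv_add (u v : 'cV[R]_n) : negv u -> negv v -> negv (u + v).
Proof. by move=> Hu Hv; rewrite opprD; apply: cone_add. Qed.

Lemma negv_scale k (u : 'cV[R]_n) : 0 <= k -> negv u -> negv (k *: u).
Proof. by move=> Hk Hu; rewrite -scalerN; apply: cone_scale. Qed.

Lemma negv_nscale k (u : 'cV[R]_n) : k <= 0 -> cone Delta u -> negv (k *: u).
Proof. by move=> Hk Hu; rewrite -scaleNr; apply: cone_scale; rewrite // oppr_ge0. Qed.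

Lemma cone_nscale k (u : 'cV[R]_n) : k <= 0 -> negv u -> cone Delta (k *: u).
Proof. move=> Hk Hu; have -> : k *: u = (- k) *: (- u) by rewrite scaleNr scalerN opprK.
by apply: cone_scale; rewrite // oppr_ge0. Qed.

Lemma cone_root_pos (u : 'cV[R]_n) : u \in Phi -> cone Delta u -> pos u.
Proof. exact: cone_pos. Qed.

Lemma sgn_pos (x d : R) : 0 < d -> 0 < x -> 0 < 2 * x / d.
Proof. by move=> Hd Hx; rewrite divr_gt0 // mulr_gt0. Qed.

Lemma sgn_neg (x d : R) : 0 < d -> x < 0 -> 2 * x / d < 0.
Proof.
move=> Hd Hx; rewrite -oppr_gt0 -mulNr -mulrN divr_gt0 // mulr_gt0 //.
by rewrite oppr_gt0.
Qed.

Variables (a b c : 'cV[R]_n).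
Hypotheses (Pa : pos a) (Pb : pos b) (Pc : pos c) (Hbc : dot b c = 0)
  (Hab : dot a b != 0) (Hac : dot a c != 0)
  (Nb : negv (V *m b)) (Nc : negv (V *m c)) (Nz : negv (V *m (refl c *m (refl b *m a)))).

Let Hcb : dot c b = 0. Proof. by rewrite dotC. Qed.
Let Da := posD HR Pa.
Let Db := posD HR Pb.
Let Dc := posD HR Pc.
Let p := 2 * dot b a / dot b b.
Let p' := 2 * dot a b / dot a a.
Let q := 2 * dot c a / dot c c.
Let q' := 2 * dot a c / dot a a.
Let Z := V *m (refl c *m (refl b *m a)).
Let X := V *m (refl b *m a).
Let Y := V *m (refl c *m a).

Let Eba : refl b *m a = a - p *: b. Proof. exact: reflE. Qed.
Let Eca : refl c *m a = a - q *: c. Proof. exact: reflE. Qed.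
Let Eab : refl a *m b = b - p' *: a. Proof. exact: reflE. Qed.
Let Eac : refl a *m c = c - q' *: a. Proof. exact: reflE. Qed.

Let EZX : Z = X - q *: (V *m c).
Proof.
rewrite /Z /X [refl c *m (refl b *m a)]reflE -dot_refl (refl_orth Hbc).
by rewrite mulmxBr scalemxAr.
Qed.

Let EZY : Z = Y - p *: (V *m b).
Proof.
rewrite /Z /Y.
have -> : refl c *m (refl b *m a) = refl b *m (refl c *m a) by rewrite !mulmxA (refl_comm Db Dc Hbc).
rewrite [refl b *m (refl c *m a)]reflE -dot_refl (refl_orth Hcb).
by rewrite mulmxBr scalemxAr.
Qed.

Let rrb : refl (refl b *m a) *m b = b + p' *: (refl b *m a).
Proof.
rewrite reflE dot_refl2 // dot_refl refl_self // dotNr.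
by rewrite mulrN mulNr scaleNr opprK.
Qed.

Let rrc : refl (refl c *m a) *m c = c + q' *: (refl c *m a).
Proof.
rewrite reflE dot_refl2 // dot_refl refl_self // dotNr.
by rewrite mulrN mulNr scaleNr opprK.
Qed.

Let T3 : V *m (refl c *m (refl (refl b *m a) *m b)) = V *m b + p' *: Z.
Proof.
by rewrite rrb mulmxDr -scalemxAr (refl_orth Hcb) mulmxDr -scalemxAr.
Qed.

Let T4 : V *m (refl b *m (refl (refl c *m a) *m c)) = V *m c + q' *: Z.
Proof.
rewrite rrc mulmxDr -scalemxAr (refl_orth Hbc) mulmxDr -scalemxAr.
by rewrite /Z; congr (_ + _ *: (V *m _)); rewrite !mulmxA (refl_comm Db Dc Hbc).
Qed.


Let Pab_root : refl a *m b \in Phi. Proof. exact (reflP HR Pa Pb). Qed.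
Let Pac_root : refl a *m c \in Phi. Proof. exact (reflP HR Pa Pc). Qed.
Let Pba_root : refl b *m a \in Phi. Proof. exact (reflP HR Pb Pa). Qed.
Let Pca_root : refl c *m a \in Phi. Proof. exact (reflP HR Pc Pa). Qed.
Let HX : X \in Phi. Proof. exact: HV. Qed.
Let HY : Y \in Phi. Proof. exact: HV. Qed.

Let cint x y : x \in Phi -> y \in Phi -> exists z : int, 2 * dot x y / dot x x = z%:~R.
Proof. by case: HR => _ _ _ H _; apply: H. Qed.

Let b0 : 0 < dot b b. Proof. exact: dot_gt0. Qed.
Let c0 : 0 < dot c c. Proof. exact: dot_gt0. Qed.
Let a0 : 0 < dot a a. Proof. exact: dot_gt0. Qed.

Let pp_cases : 0 < p * p' -> p * p' = 1 \/ 2 <= p * p'.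
Proof.
have [z1 H1] := cint (posP Pb) (posP Pa); have [z2 H2] := cint (posP Pa) (posP Pb).
by rewrite /p /p' H1 H2 -intrM; apply: int_12.
Qed.

Let qq_cases : 0 < q * q' -> q * q' = 1 \/ 2 <= q * q'.
Proof.
have [z1 H1] := cint (posP Pc) (posP Pa); have [z2 H2] := cint (posP Pa) (posP Pc).
by rewrite /q /q' H1 H2 -intrM; apply: int_12.
Qed.

Let pp_one : 0 < p -> 0 < p' -> p * p' = 1 -> p = 1 /\ p' = 1.
Proof.
have [z1 H1] := cint (posP Pb) (posP Pa); have [z2 H2] := cint (posP Pa) (posP Pb).
by apply: prod_one; [exact: H1 | exact: H2].
Qed.

Let qq_one : 0 < q -> 0 < q' -> q * q' = 1 -> q = 1 /\ q' = 1.
Proof.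
have [z1 H1] := cint (posP Pc) (posP Pa); have [z2 H2] := cint (posP Pa) (posP Pc).
by apply: prod_one; [exact: H1 | exact: H2].
Qed.

Let both : 2 <= p * p' -> 2 <= q * q' -> a = (p / 2) *: b + (q / 2) *: c /\ p * p' = 2.
Proof. exact: both2. Qed.

Let Yneg : 0 < p -> negv Y.
Proof.
move=> Hp; have -> : Y = Z + p *: (V *m b) by rewrite EZY subrK.
by apply: negv_add => //; apply: negv_scale => //; apply: ltW.
Qed.

Let Xneg : 0 < q -> negv X.
Proof.
move=> Hq; have -> : X = Z + q *: (V *m c) by rewrite EZX subrK.
by apply: negv_add => //; apply: negv_scale => //; apply: ltW.
Qed.

Let T3neg : 0 <= p' -> negv (V *m (refl c *m (refl (refl b *m a) *m b))).
Proof. by move=> Hp; rewrite T3; apply: negv_add => //; apply: negv_scale. Qed.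

Let T4neg : 0 <= q' -> negv (V *m (refl b *m (refl (refl c *m a) *m c))).
Proof. by move=> Hq; rewrite T4; apply: negv_add => //; apply: negv_scale. Qed.

Let T3neg1 : p' <= 0 -> p * p' = 1 -> cone Delta Y ->
  negv (V *m (refl c *m (refl (refl b *m a) *m b))).
Proof.
move=> Hp Hpp HYc; rewrite T3 EZY scalerBr scalerA mulrC Hpp scale1r.
rewrite addrCA subrr addr0; exact: negv_nscale.
Qed.

Let T4neg1 : q' <= 0 -> q * q' = 1 -> cone Delta X ->
  negv (V *m (refl b *m (refl (refl c *m a) *m c))).
Proof.
move=> Hq Hqq HXc; rewrite T4 EZX scalerBr scalerA mulrC Hqq scale1r.
rewrite addrCA subrr addr0; exact: negv_nscale.
Qed.


Lemma zL1 (x y : 'cV[R]_n) : x + y - (y + y) = x - y.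
Proof. by rewrite opprD addrA addrK. Qed.
Lemma zL2 (x y : 'cV[R]_n) : x + y - (x + x) = y - x.
Proof. by rewrite (addrC x y) zL1. Qed.

Let Gex := exists a' b' c', G Phi Delta V a b c a' b' c'.

Let hpos (x : R) : 0 < x -> 0 <= - (x / 2) -> False.
Proof. by move=> Hx; rewrite oppr_ge0 lt_geF // divr_gt0. Qed.

Let caseI : 0 < dot a b -> 0 < dot a c -> Gex.
Proof.
move=> hx hy.
have hp : 0 < p by rewrite /p dotC sgn_pos.
have hp' : 0 < p' by rewrite /p' sgn_pos.
have hq : 0 < q by rewrite /q dotC sgn_pos.
have hq' : 0 < q' by rewrite /q' sgn_pos.
case: (root_dich HB Pba_root) => [Cba|Nba].
  exists b, (refl b *m a), c; apply: K3 => //.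
    exact: cone_pos.
  exact: T3neg (ltW hp').
case: (root_dich HB Pca_root) => [Cca|Nca].
  exists c, (refl c *m a), b; apply: K4 => //.
    exact: cone_pos.
  exact: T4neg (ltW hq').
case: (pp_cases (mulr_gt0 hp hp')) => [H1|H2].
  have [e1 e2] := pp_one hp hp' H1.
  have Cab : cone Delta (refl a *m b) by rewrite Eab e2 scale1r -opprB -(scale1r b) -e1 -Eba.
  exists (refl a *m b), a, c; apply: K2 => //; first exact: cone_pos.
  exact: Yneg.
case: (qq_cases (mulr_gt0 hq hq')) => [H1|H2'].
  have [e1 e2] := qq_one hq hq' H1.
  have Cac : cone Delta (refl a *m c) by rewrite Eac e2 scale1r -opprB -(scale1r c) -e1 -Eca.
  exists (refl a *m c), a, b; apply: K1 => //; first exact: cone_pos.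
  exact: Xneg.
have [Ea _] := both H2 H2'.
exfalso; apply: (root_not_both HR HB Pba_root) => //.
have -> : refl b *m a = - (refl c *m a).
  have Hpb : p *: b = (p / 2) *: b + (p / 2) *: b by rewrite -scalerDl -splitr.
  have Hqc : q *: c = (q / 2) *: c + (q / 2) *: c by rewrite -scalerDl -splitr.
  by rewrite Eba Eca Ea Hpb Hqc zL2 zL1 opprB.
done.
Qed.


Let cone_sub (u v : 'cV[R]_n) k : pos u -> pos v -> k <= 0 -> cone Delta (u - k *: v).
Proof.
move=> Hu Hv Hk; rewrite -scaleNr; apply: cone_add; first exact: (pos_cone Hu).
by apply: cone_scale; [rewrite oppr_ge0 | exact: (pos_cone Hv)].
Qed.

Let caseII : 0 < dot a b -> dot a c < 0 -> Gex.
Proof.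
move=> hx hy.
have hp : 0 < p by rewrite /p dotC sgn_pos.
have hp' : 0 < p' by rewrite /p' sgn_pos.
have hq : q < 0 by rewrite /q dotC sgn_neg.
have hq' : q' < 0 by rewrite /q' sgn_neg.
case: (root_dich HB HX) => [CX|NX]; last first.
  exists (refl a *m c), a, b; apply: K1 => //.
  by apply: cone_pos => //; rewrite Eac; apply: cone_sub => //; apply: ltW.
case: (root_dich HB Pba_root) => [Cba|Nba].
  exists b, (refl b *m a), c; apply: K3 => //.
    exact: cone_pos.
  exact: T3neg (ltW hp').
case: (pp_cases (mulr_gt0 hp hp')) => [H1|H2].
  have [e1 e2] := pp_one hp hp' H1.
  have Cab : cone Delta (refl a *m b) by rewrite Eab e2 scale1r -opprB -(scale1r b) -e1 -Eba.
  exists (refl a *m b), a, c; apply: K2 => //; first exact: cone_pos.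
  exact: Yneg.
have hqq : 0 < q * q' by rewrite nmulr_rgt0.
case: (qq_cases hqq) => [H1|H2'].
  exists c, (refl c *m a), b; apply: K4 => //.
    by apply: cone_pos => //; rewrite Eca; apply: cone_sub => //; apply: ltW.
  exact: T4neg1 (ltW hq') H1 CX.
have [Ea Hpp] := both H2 H2'.
have Cab : cone Delta (refl a *m b).
  have Hk : p' * (p / 2) = 1 by rewrite mulrA (mulrC p' p) Hpp divff // two_nz.
  have -> : refl a *m b = (- (p' * (q / 2))) *: c.
    rewrite Eab {1}Ea scalerDr !scalerA Hk scale1r opprD addrA subrr sub0r.
    by rewrite scaleNr.
  apply: cone_scale; last exact: (pos_cone Pc).
  rewrite oppr_ge0 pmulr_rle0 //.
  by rewrite pmulr_lle0 ?invr_gt0 // ltW.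
exists (refl a *m b), a, c; apply: K2 => //; first exact: cone_pos.
exact: Yneg.
Qed.

Let caseIV : dot a b < 0 -> dot a c < 0 -> Gex.
Proof.
move=> hx hy.
have hp : p < 0 by rewrite /p dotC sgn_neg.
have hp' : p' < 0 by rewrite /p' sgn_neg.
have hq : q < 0 by rewrite /q dotC sgn_neg.
have hq' : q' < 0 by rewrite /q' sgn_neg.
case: (root_dich HB HY) => [CY|NY]; last first.
  exists (refl a *m b), a, c; apply: K2 => //.
  by apply: cone_pos => //; rewrite Eab; apply: cone_sub => //; apply: ltW.
case: (root_dich HB HX) => [CX|NX]; last first.
  exists (refl a *m c), a, b; apply: K1 => //.
  by apply: cone_pos => //; rewrite Eac; apply: cone_sub => //; apply: ltW.
have hpp : 0 < p * p' by rewrite nmulr_rgt0.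
have hqq : 0 < q * q' by rewrite nmulr_rgt0.
case: (pp_cases hpp) => [H1|H2].
  exists b, (refl b *m a), c; apply: K3 => //.
    by apply: cone_pos => //; rewrite Eba; apply: cone_sub => //; apply: ltW.
  exact: T3neg1 (ltW hp') H1 CY.
case: (qq_cases hqq) => [H1|H2'].
  exists c, (refl c *m a), b; apply: K4 => //.
    by apply: cone_pos => //; rewrite Eca; apply: cone_sub => //; apply: ltW.
  exact: T4neg1 (ltW hq') H1 CX.
have [Ea _] := both H2 H2'.
exfalso; apply: (root_not_both HR HB (posP Pa) (pos_cone Pa)).
rewrite Ea opprD -!scaleNr; apply: cone_add; apply: cone_scale; try exact: (pos_cone Pb); try exact: (pos_cone Pc).
  by rewrite oppr_ge0 pmulr_lle0 ?invr_gt0 // ltW.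
by rewrite oppr_ge0 pmulr_lle0 ?invr_gt0 // ltW.
Qed.

Lemma core_ab : ~ (dot a b < 0 /\ 0 < dot a c) -> Gex.
Proof.
move=> Hn.
case/orP: (lt_total Hab) => hx; case/orP: (lt_total Hac) => hy.
- exact: caseIV.
- by exfalso; apply: Hn.
- exact: caseII.
- exact: caseI.
Qed.

End Core2.
Section Final.
Variables (R : realFieldType) (n : nat) (Phi Delta : seq 'cV[R]_n).
Hypothesis HR : root_system Phi.
Hypothesis HB : is_base Phi Delta.
Local Notation pos := (pos_root Phi Delta).
Local Notation negv u := (cone Delta (- u)).

Lemma trE (g : 'cV[R]_n) (X : 'M[R]_n) (u : 'cV[R]_n) : (refl g *m X)^T *m u = X^T *m (refl g *m u).
Proof. by rewrite trmx_mul refl_sym mulmxA. Qed.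

Lemma finalize (w : 'M[R]_n) k a' b' c' :
  weyl_len Delta w k.+3 ->
  weyl_len Delta (refl a' *m refl b' *m refl c' *m w) k ->
  pos a' -> pos b' -> pos c' ->
  negv (w^T *m c') -> negv (w^T *m (refl c' *m b')) ->
  negv (w^T *m (refl c' *m (refl b' *m a'))) ->
  [/\ weyl_len Delta (refl a' *m refl b' *m refl c' *m w) k,
      weyl_len Delta (refl b' *m refl c' *m w) k.+1,
      weyl_len Delta (refl c' *m w) k.+2 &
      weyl_len Delta w k.+3].
Proof.
move=> Lw L0 Pa Pb Pc N1 N2 N3.
have Hw : haswd Delta w k.+3 by case: Lw.
have HX : haswd Delta (refl c' *m w) k.+2 by apply: (word_down HR HB).
have HY : haswd Delta (refl b' *m (refl c' *m w)) k.+1.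
  by apply: (word_down HR HB) => //; rewrite trE.
have LY : weyl_len Delta (refl b' *m (refl c' *m w)) k.+1.
  apply: (len_up HR HB (g := a')) => //; last by rewrite !trE.
  by rewrite !mulmxA.
have LX : weyl_len Delta (refl c' *m w) k.+2.
  by apply: (len_up HR HB (g := b')) => //; rewrite trE.
by split => //; rewrite -mulmxA.
Qed.

End Final.
Theorem mainTheorem19 (R : realFieldType) (n : nat) (Phi Delta : seq 'cV[R]_n)
  (a b c : 'cV[R]_n) (w : 'M[R]_n) :
  root_system Phi -> is_base Phi Delta ->
  pos_root Phi Delta a -> pos_root Phi Delta b -> pos_root Phi Delta c ->
  in_weyl Phi w ->
  (exists k : nat,
     [/\ weyl_len Delta (refl a *m refl b *m refl c *m w) k,
         weyl_len Delta (refl b *m refl c *m w) k.+1,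
         weyl_len Delta (refl c *m w) k.+2 &
         weyl_len Delta w k.+3]) ->
  (dot a b != 0 \/ dot a c != 0) ->
  exists a' b' c' : 'cV[R]_n,
    [/\ pos_root Phi Delta a' /\ pos_root Phi Delta b' /\ pos_root Phi Delta c',
        dot b' c' != 0,
        refl a *m refl b *m refl c = refl a' *m refl b' *m refl c' &
        exists k : nat,
          [/\ weyl_len Delta (refl a' *m refl b' *m refl c' *m w) k,
              weyl_len Delta (refl b' *m refl c' *m w) k.+1,
              weyl_len Delta (refl c' *m w) k.+2 &
              weyl_len Delta w k.+3]].
Proof.
move=> HR HB Pa Pb Pc _ [k [L0 L1 L2 L3]] Hor.
have Da := posD HR Pa; have Db := posD HR Pb; have Dc := posD HR Pc.
have HV : forall r, r \in Phi -> w^T *m r \in Phi.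
  case: L3 => [[s [_ Hs ->]] _] r Hr.
  by apply: (word_root HR) => // y /Hs; apply: (delta_sub HB).
have N1 : cone Delta (- (w^T *m c)) by apply: (sign_of_drop HR HB L3 L2).
have N2 : cone Delta (- (w^T *m (refl c *m b))).
  rewrite -trE; apply: (sign_of_drop HR HB (m := k.+1) L2) => //.
  by rewrite mulmxA.
have N3 : cone Delta (- (w^T *m (refl c *m (refl b *m a)))).
  rewrite -trE -trE; apply: (sign_of_drop HR HB (M := k.+1) (m := k)) => //.
    by rewrite mulmxA.
  by rewrite !mulmxA.
have fin : forall a' b' c', pos_root Phi Delta a' -> pos_root Phi Delta b' -> pos_root Phi Delta c' ->
    dot b' c' != 0 -> refl a *m refl b *m refl c = refl a' *m refl b' *m refl c' ->
    cone Delta (- (w^T *m c')) -> cone Delta (- (w^T *m (refl c' *m b'))) ->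
    cone Delta (- (w^T *m (refl c' *m (refl b' *m a')))) ->
    exists a' b' c' : 'cV[R]_n,
    [/\ pos_root Phi Delta a' /\ pos_root Phi Delta b' /\ pos_root Phi Delta c',
        dot b' c' != 0,
        refl a *m refl b *m refl c = refl a' *m refl b' *m refl c' &
        exists k : nat,
          [/\ weyl_len Delta (refl a' *m refl b' *m refl c' *m w) k,
              weyl_len Delta (refl b' *m refl c' *m w) k.+1,
              weyl_len Delta (refl c' *m w) k.+2 &
              weyl_len Delta w k.+3]].
  move=> a' b' c' Pa' Pb' Pc' Hd Hp M1 M2 M3.
  exists a', b', c'; split => //; exists k.
  by apply: (finalize HR HB) => //; rewrite -Hp.
case: (eqVneq (dot b c) 0) => Hbc; last by apply: (fin a b c).
have Hcb : dot c b = 0 by rewrite dotC.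
case: (eqVneq (dot a b) 0) => Hab.
  have Hac : dot a c != 0 by case: Hor => //; rewrite Hab eqxx.
  have Hba : dot b a = 0 by rewrite dotC.
  apply: (fin b a c) => //.
  - by rewrite (refl_comm Da Db Hab).
  - by rewrite -(refl_orth Hba).
  - by rewrite (refl_orth Hab).
case: (eqVneq (dot a c) 0) => Hac.
  have Hca : dot c a = 0 by rewrite dotC.
  apply: (fin c a b) => //.
  - by rewrite (refl_comm Dc Da Hca) -!mulmxA (refl_comm Db Dc Hbc).
  - by rewrite -(refl_orth Hcb).
  - have -> : refl b *m a = refl c *m (refl b *m a).
      by rewrite (refl_orth (b := c)) // -dot_refl (refl_orth Hbc).
    done.
  - by rewrite (refl_orth Hac) (refl_orth Hbc).
have N2' : cone Delta (- (w^T *m b)) by rewrite -(refl_orth Hcb).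
have [Hneg | Hnn] := boolP ((dot a b < 0) && (0 < dot a c)).
  case/andP: Hneg => hx hy.
  have N3' : cone Delta (- (w^T *m (refl b *m (refl c *m a)))).
    have -> : refl b *m (refl c *m a) = refl c *m (refl b *m a).
      by rewrite !mulmxA (refl_comm Db Dc Hbc).
    done.
  have Hn : ~ (dot a c < 0 /\ 0 < dot a b).
    by case=> h1 _; move: (lt_trans h1 hy); rewrite ltxx.
  have [a' [b' [c' [[Pa' Pb' Pc'] Hd Hp [M1 M2 M3]]]]] :=
    core_ab HR HB HV Pa Pc Pb Hcb Hac Hab N1 N2' N3' Hn.
  apply: (fin a' b' c') => //.
  by rewrite -Hp -!mulmxA (refl_comm Db Dc Hbc).
have Hn : ~ (dot a b < 0 /\ 0 < dot a c).
  by case=> h1 h2; move/negP: Hnn; apply; rewrite h1 h2.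
have [a' [b' [c' [[Pa' Pb' Pc'] Hd Hp [M1 M2 M3]]]]] :=
  core_ab HR HB HV Pa Pb Pc Hbc Hab Hac N2' N1 N3 Hn.
by apply: (fin a' b' c').
Qed.
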